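(* Let $\mathcal{X}\subseteq\mathbb{R}^n$ and let $h = p_k \circ \dots \circ p_1:\mathbb{R}^n \to \mathcal{Y}$ be a model, where each layer $p_r:\mathbb{R}^{n^{r-1}}\to\mathbb{R}^{n^r}$ ($n^0=n$). Let $g:\mathbb{R}^n\times\mathcal{Y} \to G$ be an explanation function (EF). For $m\in\{1,\dots,k\}$ write $f_m := p_m \circ \dots \circ p_1$. Suppose that for some $i \in \{1,\dots,k\}$, $f_i$ is a $\gamma(\epsilon)$-explainable representation with respect to $g$, for a function $\gamma:(0,\infty)\to(0,\infty)$. Let $j$ with $1\le j\le i$, and assume that $p_r$ is an $l_r$-Lipschitz function for every $r \in \{j+1,\dots,i\}$. Then $f_j$ is $\hat{\gamma}(\epsilon)$-explainable with respect to $g$, where $\hat{\gamma}(\epsilon) := \gamma\left(\epsilon \cdot \prod^{i}_{r=j+1} l_r \right)$.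
   Context: $G$ is a set of explanations equipped with a norm (or distance) written $|\cdot|$; the spaces $\mathbb{R}^{d}$ are also equipped with a norm $|\cdot|$, and Lipschitz continuity is with respect to these norms. For a model $h=c\circ f$ with representation $f:\mathcal{X}\to\mathbb{R}^d$ and an EF $g$, $f$ is called a $\gamma(\epsilon)$-explainable representation with respect to $g$ if for every $\epsilon\in(0,\infty)$ and all $x_1,x_2\in\mathcal{X}$: $|f(x_1)-f(x_2)|\le\epsilon$ implies $|g(x_1,h(x_1))-g(x_2,h(x_2))|\le\gamma(\epsilon)$. For the layered model, $f_m$ is regarded as the representation with $c=p_k\circ\dots\circ p_{m+1}$. *)

(* Defs.v *)
From mathcomp Require Import all_boot all_order all_algebra.
From mathcomp Require Import reals.
Set Implicit Arguments. Unset Strict Implicit. Unset Printing Implicit Defensive.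
Import Order.TTheory GRing.Theory Num.Theory.
Local Open Scope ring_scope.

Definition is_norm (R : realType) (d : nat) (N : 'rV[R]_d -> R) : Prop :=
  [/\ forall x, N x = 0 -> x = 0,
      forall (a : R) x, N (a *: x) = `|a| * N x
    & forall x y, N (x + y) <= N x + N y].

Definition lipschitz (R : realType) (a b : nat) (Na : 'rV[R]_a -> R)
  (Nb : 'rV[R]_b -> R) (l : R) (p : 'rV[R]_a -> 'rV[R]_b) : Prop :=
  forall x y, Nb (p x - p y) <= l * Na (x - y).

(* Layered model.  dims r = n^r (dims 0 = n).  [p r] is the paper's layer
   p_{r+1} : R^{n^r} -> R^{n^{r+1}}. *)
Fixpoint fcomp (R : realType) (dims : nat -> nat)
  (p : forall r, 'rV[R]_(dims r) -> 'rV[R]_(dims r.+1)) (m : nat)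
  : 'rV[R]_(dims 0) -> 'rV[R]_(dims m) :=
  match m with
  | 0 => fun x => x
  | m'.+1 => fun x => p m' (fcomp p m' x)
  end.
(* fcomp p m = f_m = p_m o ... o p_1 ; the model is h = fcomp p k. *)

Definition explainable_rep (R : realType) (n d : nat) (Y G : Type)
  (X : 'rV[R]_n -> Prop) (Nd : 'rV[R]_d -> R) (dG : G -> G -> R)
  (g : 'rV[R]_n -> Y -> G) (h : 'rV[R]_n -> Y)
  (f : 'rV[R]_n -> 'rV[R]_d) (gamma : R -> R) : Prop :=
  forall eps : R, 0 < eps -> forall x1 x2, X x1 -> X x2 ->
    Nd (f x1 - f x2) <= eps ->
    dG (g x1 (h x1)) (g x2 (h x2)) <= gamma eps.

(* Main.v *)
Require Import Defs.
From mathcomp Require Import all_boot all_order all_algebra.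
From mathcomp Require Import reals.
From mathcomp Require Import zify.
Import Order.TTheory GRing.Theory Num.Theory.
Local Open Scope ring_scope.

Theorem theorem2 (R : realType) (dims : nat -> nat) (k : nat)
  (p : forall r, 'rV[R]_(dims r) -> 'rV[R]_(dims r.+1))
  (nrm : forall d, 'rV[R]_d -> R) (nrm_norm : forall d, is_norm (nrm d))
  (X : 'rV[R]_(dims 0%N) -> Prop)
  (G : Type) (dG : G -> G -> R) (g : 'rV[R]_(dims 0%N) -> 'rV[R]_(dims k) -> G)
  (gamma : R -> R) (gamma_pos : forall e, 0 < e -> 0 < gamma e)
  (i j : nat) (l : nat -> R) :
  (1 <= j)%N -> (j <= i)%N -> (i <= k)%N ->
  explainable_rep X (nrm (dims i)) dG g (fcomp p k) (fcomp p i) gamma ->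
  (forall r, (j <= r < i)%N ->
     0 < l r.+1 /\ lipschitz (nrm (dims r)) (nrm (dims r.+1)) (l r.+1) (p r)) ->
  explainable_rep X (nrm (dims j)) dG g (fcomp p k) (fcomp p j)
    (fun eps => gamma (eps * \prod_(j.+1 <= r < i.+1) l r)).
Proof.
move=> j1 ji ik Hexp Hlip eps eps0 x1 x2 X1 X2 Hd.
set D := nrm (dims j) (fcomp p j x1 - fcomp p j x2).
have key : forall d, (d <= i - j)%N ->
  nrm _ (fcomp p (j + d) x1 - fcomp p (j + d) x2) <=
  (\prod_(j.+1 <= r < (j + d).+1) l r) * D /\ 0 < \prod_(j.+1 <= r < (j + d).+1) l r.
  elim=> [|d IH] hd.
    by rewrite addn0 big_geq // mul1r; split => //.
  have [IH1 IH2] := IH (ltnW hd).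
  have hr : (j <= j + d < i)%N by apply/andP; split; [apply: leq_addr|]; lia.
  have [l0 Hl] := Hlip _ hr.
  rewrite addnS big_nat_recr /=; last by lia.
  split; last by apply: mulr_gt0.
  apply: le_trans (Hl _ _) _.
  rewrite [_ * l _]mulrC -mulrA ler_pM2l //.
have [K1 K2] := key (i - j)%N (leqnn _).
rewrite subnKC // in K1 K2.
apply: Hexp => //; first by apply: mulr_gt0.
apply: le_trans K1 _.
by rewrite mulrC ler_pM2r.
Qed.
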